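(* Let $s\ge 0$, $t\ge 1$, and let $G=K_s\vee K_{2*t}$. Let $A$ be a clique of size $s+t$ in $G$ and let $B=V(G)\setminus A$. If $f:V(G)\to\mathbb{Z}^+$ satisfies $f(v)\ge s+t$ for all $v\in A$ and $f(v)\ge t$ for all $v\in B$, then $G$ is $f$-AT.
   Context: $K_{2*t}$ is the complete multipartite graph with $t$ parts of size $2$; $G_1\vee G_2$ (the join) is the disjoint union of $G_1$ and $G_2$ together with all edges between them. For a graph $G$ and $f:V(G)\to\mathbb{Z}^+$, an orientation $D$ of $E(G)$ is an Alon--Tarsi orientation for $f$ if $d^+_D(v)<f(v)$ for every vertex $v$ and the number of spanning Eulerian subgraphs of $D$ (spanning subdigraphs in which every vertex has equal in- and out-degree) with an even number of edges differs from the number with an odd number of edges; $G$ is $f$-AT if such an orientation exists. *)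

(* Defs.v *)
From HB Require Import structures.
From mathcomp Require Import all_boot.
Set Implicit Arguments. Unset Strict Implicit. Unset Printing Implicit Defensive.

Section AT.
Variable V : finType.

(* A simple graph on V is a symmetric irreflexive relation e. *)
Definition is_orientation (e D : rel V) : Prop :=
  forall x y, (D x y -> e x y) /\ (e x y -> D x y != D y x).

Definition arcs (D : rel V) : {set V * V} := [set a | D a.1 a.2].

Definition outdeg (D : rel V) (v : V) : nat := #|[set y | D v y]|.

Definition eulerian_sub (D : rel V) (H : {set V * V}) : bool :=
  (H \subset arcs D) &&
  [forall v, #|[set a in H | a.1 == v]| == #|[set a in H | a.2 == v]|].

Definition n_even_eulerian (D : rel V) : nat :=
  #|[set H : {set V * V} | eulerian_sub D H & ~~ odd #|H|]|.
Definition n_odd_eulerian (D : rel V) : nat :=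
  #|[set H : {set V * V} | eulerian_sub D H & odd #|H|]|.

Definition AT_orientation (e : rel V) (f : V -> nat) (D : rel V) : Prop :=
  is_orientation e D /\ (forall v, outdeg D v < f v) /\
  n_even_eulerian D <> n_odd_eulerian D.

Definition is_fAT (e : rel V) (f : V -> nat) : Prop :=
  exists D : rel V, AT_orientation e f D.

Definition is_clique (e : rel V) (A : {set V}) : Prop :=
  forall x y, x \in A -> y \in A -> x != y -> e x y.

End AT.

(* G = K_s \vee K_{2*t}: vertices inl i (i < s) of K_s, and inr (i, b) for
   the two vertices (b = false/true) of part i < t of K_{2*t}. *)
Definition JV (s t : nat) : finType := ('I_s + ('I_t * bool))%type.

Definition Jadj (s t : nat) : rel (JV s t) := fun x y =>
  match x, y with
  | inl i, inl j => i != j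
  | inl _, inr _ => true
  | inr _, inl _ => true
  | inr p, inr q => p.1 != q.1
  end.

(* Main.v *)
Require Import Defs.
From HB Require Import structures.
From mathcomp Require Import all_boot all_order all_algebra zify.
Set Implicit Arguments. Unset Strict Implicit. Unset Printing Implicit Defensive.
Import Order.TTheory GRing.Theory Num.Theory.
Local Open Scope ring_scope.

Lemma card_setE (T : finType) (P : pred T) : #|[set a | P a]| = (\sum_a (P a : nat))%N.
Proof.
rewrite -sum1_card big_mkcond /=; apply: eq_bigr => a _; rewrite inE; by case: (P a).
Qed.

Definition phiw (m c : nat) : rat := \prod_(k < m | (k : nat) != c) (c%:R - k%:R).
Definition Gw (m c : nat) : rat := if (c < m)%N then (phiw m c)^-1 else 0.

Lemma natr_inj_rat : injective (fun n : nat => (n%:R : rat)).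
Proof. by move=> a b /eqP; rewrite eqr_nat => /eqP. Qed.

Lemma lag_sum (m e : nat) : (0 < m)%N -> (e <= m.-1)%N ->
  \sum_(c < m) (c%:R : rat) ^+ e * (phiw m c)^-1 = (e == m.-1)%:R.
Proof.
move=> m0 em.
have sz : (size ('X^e : {poly rat}) <= m)%N by rewrite size_polyXn; case: m m0 em.
have := lagrange_gen m0 natr_inj_rat sz.
move/(congr1 (fun p : {poly rat} => p`_(m.-1))).
rewrite coefXn eq_sym => ->.
rewrite coef_sum; apply: eq_bigr => i _.
rewrite (lagrangeE m0 natr_inj_rat) /= mulrA -polyCM coefCM hornerXn.
set p := \prod_(j < m | j != i) _.
have -> : p`_m.-1 = 1.
  have mon : p \is monic by rewrite /p -big_filter; apply: monic_prod_XsubC.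
  have szp : size p = m.
    rewrite /p -big_filter size_prod_XsubC size_filter.
    have := cardC1 i. rewrite card_ord /= cardE /enum_mem -enumT /= size_filter.
    rewrite /index_enum unlock enumT => ->. by case: m i {p mon m0 em sz} => [[]|].
  by move/monicP: mon; rewrite /lead_coef szp.
rewrite mulr1; congr (_ * _); congr (_^-1).
rewrite /p horner_prod /phiw; apply: eq_bigr => j _.
by rewrite hornerXsubC.
Qed.

Section Gen.
Variable V : finType.
Variable D : rel V.

Definition Pol (y : V -> rat) : rat := \prod_(a : V * V | D a.1 a.2) (y a.1 - y a.2).
Definition hd (S : {set V*V}) (a : V*V) : V := if a \in S then a.2 else a.1.
Definition degg S v := #|[set a : V*V | D a.1 a.2 && (hd S a == v)]|.
Definition okg (S : {set V*V}) := [forall a, (a \in S) ==> D a.1 a.2].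

Lemma pol_expand y : Pol y = \sum_(S : {set V*V})
  (if okg S then (-1)^+#|S| * \prod_v y v ^+ degg S v else 0).
Proof.
pose F (a : V * V) : rat := if D a.1 a.2 then - y a.2 else 0.
pose G (a : V * V) : rat := if D a.1 a.2 then y a.1 else 1.
rewrite /Pol big_mkcond /=.
transitivity (\prod_(a : V*V) (F a + G a)).
  apply: eq_bigr => a _; rewrite /F /G; case: (D _ _) => //=.
  by rewrite addrC.
rewrite bigA_distr; apply: eq_bigr => S _.
case: ifP => okp.
  transitivity (\prod_a ((if a \in S then -1 else 1) * (if D a.1 a.2 then y (hd S a) else 1))).
    apply: eq_bigr => a _; rewrite /F /G /hd.
    move/forallP: okp => /(_ a).
    by case: (a \in S); case: (D _ _) => //= _; rewrite ?mulN1r ?mul1r ?mulr1.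
  rewrite big_split /=; congr (_ * _).
    rewrite -big_mkcond /= prodr_const; congr (_ ^+ _).
  rewrite -big_mkcond /= (partition_big (hd S) predT) //=.
  apply: eq_bigr => v _.
  rewrite (eq_bigr (fun _ => y v)); last by move=> a /andP[_ /eqP ->].
  rewrite prodr_const /degg; congr (_ ^+ _).
  by apply: eq_card => a; rewrite inE.
move/negbT/forallPn: okp => [a].
rewrite negb_imply => /andP[ga nD].
rewrite (bigD1 a) //= /F /G (negbTE nD) ga.
by rewrite mul0r.
Qed.


Definition grid K (m : V -> nat) : rat :=
  \sum_(y : {ffun V -> 'I_K}) Pol (fun v => ((y v : nat)%:R)) * \prod_v Gw (m v) (y v).
Definition Lw K m e : rat := \sum_(c : 'I_K) ((c : nat)%:R : rat)^+e * Gw m c.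

Lemma grid_expand K m : grid K m = \sum_(S : {set V*V})
   (if okg S then (-1)^+#|S| * \prod_v Lw K (m v) (degg S v) else 0).
Proof.
rewrite /grid.
under eq_bigr do rewrite pol_expand big_distrl /=.
rewrite exchange_big /=; apply: eq_bigr => S _.
case: ifP => ok; last by rewrite big1 // => y _; rewrite mul0r.
under eq_bigr do rewrite -mulrA -big_split /=.
rewrite -mulr_sumr; congr (_ * _).
rewrite /Lw.
rewrite (bigA_distr_bigA (fun v (c : 'I_K) => ((c : nat)%:R : rat) ^+ degg S v * Gw (m v) c)) /=.
by [].
Qed.

Lemma Lw_val K m e : (m <= K)%N -> (0 < m)%N -> (e <= m.-1)%N -> Lw K m e = (e == m.-1)%:R.
Proof.
move=> mK m0 em; rewrite /Lw /Gw.
transitivity (\sum_(c < K | (c < m)%N) ((c : nat)%:R : rat) ^+ e * (phiw m c)^-1).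
  by rewrite [RHS]big_mkcond /=; apply: eq_bigr => c _; case: ifP => _; rewrite ?mulr0.
transitivity (\sum_(c < m) ((c : nat)%:R : rat) ^+ e * (phiw m c)^-1); last exact: lag_sum.
by rewrite (big_ord_widen K (fun c : nat => (c%:R : rat) ^+ e * (phiw m c)^-1) mK).
Qed.

Lemma sum_fib (h : V * V -> V) : (\sum_v #|[set a : V*V | D a.1 a.2 && (h a == v)]| = #|[set a : V*V | D a.1 a.2]|)%N.
Proof.
rewrite card_setE; under eq_bigr do rewrite card_setE.
rewrite exchange_big /=; apply: eq_bigr => a _.
rewrite (bigD1 (h a)) //= eqxx andbT big1 ?addn0 // => v /negbTE hv.
by rewrite eq_sym hv andbF.
Qed.

Lemma outdeg_fib v : outdeg D v = #|[set a : V*V | D a.1 a.2 && (a.1 == v)]|.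
Proof.
rewrite /outdeg !card_setE.
rewrite -(pair_big xpredT xpredT (fun u w => (D u w && (u == v) : nat))) /=.
rewrite [RHS](bigD1 v) //= [X in (_ + X)%N]big1 ?addn0; last first.
  by move=> u /negbTE hu; apply: big1 => w _; rewrite hu andbF.
by apply: eq_bigr => w _; rewrite eqxx andbT.
Qed.


Definition bal (S : {set V*V}) :=
  [forall v, #|[set a in S | a.1 == v]| == #|[set a in S | a.2 == v]|].

Lemma degsum S : (\sum_v degg S v = \sum_v outdeg D v)%N.
Proof.
rewrite /degg sum_fib; under [RHS]eq_bigr do rewrite outdeg_fib.
by rewrite (sum_fib fst).
Qed.

Lemma deg_eq S v : okg S ->
  (degg S v == outdeg D v) = (#|[set a in S | a.1 == v]| == #|[set a in S | a.2 == v]|).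
Proof.
move=> /forallP ok.
rewrite outdeg_fib /degg !card_setE.
pose X := (\sum_a (D a.1 a.2 && (a \notin S) && (a.1 == v) : nat))%N.
have -> : (\sum_a (D a.1 a.2 && (hd S a == v) : nat) =
          X + \sum_a ((a \in S) && (a.2 == v) : nat))%N.
  rewrite -big_split /=; apply: eq_bigr => a _; rewrite /hd.
  have := ok a; case: (a \in S) => /=; case: (D _ _) => //= _.
  by rewrite addn0.
have -> : (\sum_a (D a.1 a.2 && (a.1 == v) : nat) =
          X + \sum_a ((a \in S) && (a.1 == v) : nat))%N.
  rewrite -big_split /=; apply: eq_bigr => a _.
  have := ok a; case: (a \in S) => /=; case: (D _ _) => //= _.
  by rewrite addn0.
by rewrite eqn_add2l eq_sym.
Qed.

Lemma exists_lt (F G : V -> nat) v : (\sum_w F w = \sum_w G w)%N -> F v != G v ->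
  exists w, (F w < G w)%N.
Proof.
move=> hs hne.
case: (boolP [exists w, (F w < G w)%N]) => [/existsP[w hw]|/existsPn hn]; first by exists w.
have hle : forall w, (G w <= F w)%N by move=> w; rewrite leqNgt hn.
have hlt : (G v < F v)%N by rewrite ltn_neqAle eq_sym hne hle.
move: hs; rewrite (bigD1 v) //= [X in _ = X](bigD1 v) //=.
have h1 : (\sum_(w | w != v) G w <= \sum_(w | w != v) F w)%N.
  by apply: leq_sum => w _; exact: hle.
move=> h2; exfalso; lia.
Qed.

Lemma prodL K m S : (forall v, m v <= K)%N -> (forall v, 0 < m v)%N ->
  (forall v, outdeg D v = (m v).-1) -> okg S ->
  \prod_v Lw K (m v) (degg S v) = (bal S)%:R.
Proof.
move=> mK m0 hm ok.
case: (boolP (bal S)) => hb.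
  apply: big1 => v _.
  have : degg S v == outdeg D v by rewrite deg_eq //; move/forallP: hb.
  move/eqP => ->; rewrite hm Lw_val // eqxx //.
have [v hv] : exists v, degg S v != outdeg D v.
  move/forallPn: hb => [v hv]; exists v; by rewrite deg_eq.
have [w hw] := exists_lt (degsum S) hv.
rewrite (bigD1 w) //= Lw_val //; last by rewrite -hm ltnW.
by rewrite -hm (ltn_eqF hw) mul0r.
Qed.

Theorem grid_diff K m : (forall v, m v <= K)%N -> (forall v, 0 < m v)%N ->
  (forall v, outdeg D v = (m v).-1) ->
  grid K m = (n_even_eulerian D)%:R - (n_odd_eulerian D)%:R.
Proof.
move=> mK m0 hm.
rewrite grid_expand /n_even_eulerian /n_odd_eulerian !card_setE !natr_sum -sumrB.
apply: eq_bigr => S _.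
have hok : okg S = (S \subset arcs D).
  apply/forallP/subsetP => [h a aS|h a]; first by rewrite inE; exact: (implyP (h a)).
  by apply/implyP => /h; rewrite inE.
rewrite /eulerian_sub -hok.
case: ifP => ok /=; last by rewrite subrr.
rewrite prodL // -/(bal S).
case: (bal S) => /=; last by rewrite mulr0 subrr.
rewrite mulr1 -signr_odd; case: (odd #|S|) => /=; by rewrite ?subr0 ?sub0r ?expr1 ?expr0.
Qed.

End Gen.

Section Spec.
Variables (s t : nat) (ht : (1 <= t)%N) (A : {set JV s t}) (hA : #|A| = s + t)
  (hcl : is_clique (@Jadj s t) A).

Definition proj (x : JV s t) : ('I_s + 'I_t)%type :=
  match x with inl j => inl j | inr p => inr p.1 end.

Lemma proj_inj : {in A &, injective proj}.
Proof.
move=> [j|[i b]] [k|[l c]] //= xA yA.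
- by case=> ->.
- case=> eil; subst l; case: (eqVneq b c) => [-> //|bc].
  have := hcl xA yA; rewrite /Jadj /= eqxx => h; suff: false by [].
  by apply: h; apply/eqP; case=> e; rewrite e eqxx in bc.
Qed.

Lemma proj_onto z : exists2 x, x \in A & proj x = z.
Proof.
have : proj @: A = setT.
  apply/eqP; rewrite eqEcard subsetT /= cardsT card_in_imset; last exact: proj_inj.
  by rewrite card_sum !card_ord hA.
move=> h; have : z \in proj @: A by rewrite h inE.
by case/imsetP => x xA ->; exists x.
Qed.

Lemma inl_inA j : inl j \in A.
Proof. by have [[k|p] xA //= [<-]] := proj_onto (inl j). Qed.

Definition pk (i : 'I_t) : bool := inr (i, true) \in A.

Lemma notboth i : ~~ ((inr (i, false) \in A) && (inr (i, true) \in A)).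
Proof.
apply/negP => /andP[h1 h2].
by have := proj_inj h1 h2 erefl.
Qed.

Lemma inA_inr i b : (inr (i, b) \in A) = (b == pk i).
Proof.
have [[k|[l c]] //= xA [eli]] := proj_onto (inr i); subst l.
have := notboth i.
by rewrite /pk; case: b; case: c xA => xA; rewrite xA //= ?andbT ?andTb => /negbTE ->.
Qed.


Definition Dr : rel (JV s t) := fun x y =>
  match x, y with
  | inl j, inl k => (k < j)%N
  | inl _, inr _ => y \notin A
  | inr _, inl _ => x \in A
  | inr p, inr q => (p.1 != q.1) &&
      (if (q.1 < p.1)%N then (x \in A) == (y \in A) else (x \in A) != (y \in A))
  end.

Definition mm (x : JV s t) : nat :=
  match x with inl j => (t + j).+1 | inr _ => if x \in A then s + t else t end.

Lemma Dr_orient : is_orientation (@Jadj s t) Dr.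
Proof.
move=> [j|[i b]] [k|[l c]]; rewrite /Dr /Jadj /=; split => //.
- by move=> h; rewrite neq_ltn h orbT.
- move=> hjk; case: (ltngtP j k) => // /val_inj e; by rewrite e eqxx in hjk.
- by move=> _; case: (_ \in A).
- by move=> _; case: (_ \in A).
- by case/andP.
- move=> hil; have hli : l != i by rewrite eq_sym.
  rewrite hil hli /=.
  case: (ltngtP i l) => h.
  + by case: (_ \in A); case: (_ \in A).
  + by case: (_ \in A); case: (_ \in A).
  + by move/val_inj: h hil => ->; rewrite eqxx.
Qed.

Lemma sum_b (F : bool -> nat) i : (\sum_b F (inr (i, b) \in A))%N = (F true + F false)%N.
Proof. by rewrite big_bool !inA_inr /=; case: (pk i); rewrite //= addnC. Qed.

Lemma sum_pair (F : 'I_t * bool -> nat) : (\sum_p F p = \sum_i \sum_b F (i, b))%N.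
Proof. by rewrite pair_big; apply: eq_bigr => -[]. Qed.

Lemma Dr_outdeg v : outdeg Dr v = (mm v).-1.
Proof.
rewrite /outdeg card_setE big_sumType /= sum_pair.
case: v => [j|[i b]] /=.
- have -> : (\sum_(k < s) ((k < j)%N : nat) = j)%N.
    rewrite -big_mkcond /= (big_ord_narrow (ltnW (ltn_ord j))).
    by rewrite sum1_card card_ord.
  under eq_bigr do rewrite (sum_b (fun c => ~~ c)) /=.
  by rewrite sum1_card card_ord addnC.
- rewrite sum_nat_const card_ord.
  under eq_bigr => k _ do rewrite (sum_b (fun c => (i != k) &&
      (if (k < i)%N then (inr (i, b) \in A) == c else (inr (i, b) \in A) != c))) /=.
  rewrite (eq_bigr (fun k => ((i != k) : nat))); last first.
    move=> k _; case: (i != k) => //=; case: (k < i)%N; by case: (_ \in A).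
  rewrite -card_setE.
  have -> : [set k | i != k] = [set~ i] by apply/setP => k; rewrite !inE eq_sym.
  rewrite cardsC1 card_ord.
  case: (_ \in A) => /=; lia.
Qed.


Lemma Pol_pair (V : finType) (D : rel V) y :
  Pol D y = \prod_u \prod_(w | D u w) (y u - y w).
Proof. by rewrite /Pol pair_big_dep /=. Qed.

Lemma prod_pair (F : 'I_t * bool -> rat) : \prod_p F p = \prod_i \prod_b F (i, b).
Proof. by rewrite pair_big; apply: eq_bigr => -[]. Qed.

Lemma prod_bA (X : rat) i : \prod_b (if inr (i, b) \in A then X else 1) = X.
Proof. by rewrite big_bool !inA_inr; case: (pk i); rewrite /= ?mulr1 ?mul1r. Qed.

Lemma prod_bnA (X : rat) i : \prod_b (if inr (i, b) \notin A then X else 1) = X.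
Proof. by rewrite big_bool !inA_inr; case: (pk i); rewrite /= ?mulr1 ?mul1r. Qed.

Definition yz (z : 'I_t -> nat) (v : JV s t) : nat :=
  match v with inl j => (t + j)%N | inr p => z p.1 end.

Definition Ez (z : 'I_t -> nat) (i k : 'I_t) : rat :=
  if i == k then 1 else ((z i)%:R - (z k)%:R) ^+ 2.

Definition Qz (z : 'I_t -> nat) : rat :=
  (\prod_(j : 'I_s) ((\prod_(k : 'I_s | (k < j)%N) (((t + j)%N)%:R - ((t + k)%N)%:R))
      * \prod_i (((t + j)%N)%:R - (z i)%:R)))
  * \prod_i ((\prod_(k : 'I_s) ((z i)%:R - ((t + k)%N)%:R)) * \prod_k Ez z i k).

Lemma Ebb (z : 'I_t -> nat) i k :
  \prod_b \prod_c (if Dr (inr (i, b)) (inr (k, c)) then ((z i)%:R - (z k)%:R : rat) else 1)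
  = Ez z i k.
Proof.
rewrite /Ez !big_bool /Dr /= !inA_inr.
case: (eqVneq i k) => [<-|hik] /=; first by rewrite !mulr1.
case: (k < i)%N; case: (pk i); case: (pk k); by rewrite /= ?mulr1 ?mul1r expr2.
Qed.

Lemma Pol_Qz z : Pol Dr (fun v => ((yz z v)%:R : rat)) = Qz z.
Proof.
rewrite Pol_pair big_sumType /=; congr (_ * _).
  apply: eq_bigr => j _; rewrite big_sumType /=; congr (_ * _).
  by rewrite big_mkcond prod_pair; apply: eq_bigr => i _; rewrite /= prod_bnA.
rewrite prod_pair; apply: eq_bigr => i _.
under eq_bigr do rewrite big_sumType /=.
rewrite big_split /=; congr (_ * _).
  transitivity (\prod_b (if inr (i, b) \in A then
       \prod_(k : 'I_s) ((z i)%:R - ((t + k)%N)%:R) else (1 : rat))); last exact: prod_bA.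
  apply: eq_bigr => b _; case: (inr (i, b) \in A) => //.
  by rewrite big_pred0.
under eq_bigr do rewrite big_mkcond prod_pair /=.
rewrite exchange_big /=; apply: eq_bigr => k _.
by rewrite -Ebb.
Qed.

Lemma Qz_inv (z : 'I_t -> nat) (h : 'I_t -> 'I_t) : injective h ->
  Qz (fun i => z (h i)) = Qz z.
Proof.
move=> hinj; rewrite /Qz; congr (_ * _).
  apply: eq_bigr => j _; congr (_ * _).
  by rewrite [RHS](reindex_inj hinj).
rewrite [RHS](reindex_inj hinj); apply: eq_bigr => i _; congr (_ * _).
rewrite [RHS](reindex_inj hinj); apply: eq_bigr => k _.
by rewrite /Ez (inj_eq hinj).
Qed.

Definition Wz (z : 'I_t -> nat) : rat := \prod_v Gw (mm v) (yz z v).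

Lemma Wz_inv (z : 'I_t -> nat) (h : 'I_t -> 'I_t) : injective h ->
  Wz (fun i => z (h i)) = Wz z.
Proof.
move=> hinj; rewrite /Wz !big_sumType /=; congr (_ * _).
rewrite !prod_pair /=.
have e : forall (c : nat) i,
    \prod_b Gw (if inr (i, b) \in A then s + t else t)%N c = Gw (s + t) c * Gw t c.
  move=> c i; rewrite big_bool /= !inA_inr.
  by case: (pk i); rewrite //= mulrC.
under eq_bigr do rewrite e.
under [RHS]eq_bigr do rewrite e.
by rewrite [RHS](reindex_inj hinj).
Qed.

Definition Tn (y : JV s t -> nat) : rat :=
  Pol Dr (fun v => ((y v)%:R : rat)) * \prod_v Gw (mm v) (y v).

Lemma Tn_ext y y' : (forall v, y v = y' v) -> Tn y = Tn y'.
Proof.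
move=> e; rewrite /Tn /Pol; congr (_ * _).
  by apply: eq_bigr => a _; rewrite !e.
by apply: eq_bigr => v _; rewrite e.
Qed.

Lemma Tn_inv (z : 'I_t -> nat) (h : 'I_t -> 'I_t) : injective h ->
  Tn (yz (fun i => z (h i))) = Tn (yz z).
Proof.
move=> hinj; rewrite /Tn !Pol_Qz Qz_inv //; congr (_ * _).
exact: Wz_inv.
Qed.


Lemma Dr_adj u w : Jadj u w -> Dr u w || Dr w u.
Proof.
move=> h; have [_ H] := Dr_orient u w; move: (H h).
by case: (Dr u w); case: (Dr w u).
Qed.

Lemma mm_le v : (mm v <= s + t)%N.
Proof.
case: v => [j|p] /=; first by have := ltn_ord j; lia.
by case: (_ \in A); lia.
Qed.

Lemma mm_pos v : (0 < mm v)%N.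
Proof. case: v => [j|p] //=; case: (_ \in A); lia. Qed.

Definition aa (i : 'I_t) : JV s t := inr (i, pk i).
Definition bb (i : 'I_t) : JV s t := inr (i, ~~ pk i).

Lemma aa_in i : aa i \in A.
Proof. by rewrite inA_inr. Qed.
Lemma bb_notin i : bb i \notin A.
Proof. by rewrite inA_inr; case: (pk i). Qed.

Lemma charz (y : JV s t -> nat) : (forall v, y v < mm v)%N ->
  (forall u w, Jadj u w -> y u != y w) ->
  exists2 z : 'I_t -> 'I_t, injective z & forall v, y v = yz (fun i => val (z i)) v.
Proof.
move=> hlt hpr.
have Ainj : {in A &, injective y}.
  move=> u w uA wA e; case: (eqVneq u w) => // uw.
  by have := hpr u w (hcl uA wA uw); rewrite e eqxx.
have surj : forall c, (c < s + t)%N -> exists2 u, u \in A & y u = c.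
  have U : uniq (map y (enum A)).
    by rewrite map_inj_in_uniq ?enum_uniq // => u w; rewrite !mem_enum; exact: Ainj.
  have sub : {subset map y (enum A) <= iota 0 (s + t)}.
    move=> c /mapP [u uA ->]; rewrite mem_iota /= add0n.
    exact: leq_trans (hlt u) (mm_le u).
  have hsz : (size (iota 0 (s + t)) <= size (map y (enum A)))%N.
    by rewrite size_iota size_map -cardE hA.
  have [_ eqs] := uniq_min_size U sub hsz.
  move=> c hc; have : c \in map y (enum A) by rewrite eqs mem_iota.
  by case/mapP => u; rewrite mem_enum => uA ->; exists u.
have hbb : forall i, y (bb i) = y (aa i).
  move=> i.
  have hb : (y (bb i) < s + t)%N.
    apply: leq_trans (hlt _) _; rewrite /= (negbTE (bb_notin i)); lia.
  have [u uA eu] := surj _ hb.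
  case: (eqVneq u (aa i)) => [<- //|ua].
  have adj : Jadj u (bb i).
    move: ua uA {eu}; case: u => [j|[k c]] //= ua.
    rewrite inA_inr => /eqP ec; subst c.
    case: (eqVneq k i) => [eki|//]; subst k.
    by rewrite /aa eqxx in ua.
  by have := hpr _ _ adj; rewrite eu eqxx.
have hat : forall i, (y (aa i) < t)%N.
  move=> i; rewrite -hbb; have := hlt (bb i); by rewrite /= (negbTE (bb_notin i)).
pose z i := Ordinal (hat i).
have zinj : injective z.
  move=> i k /(congr1 val) /= e.
  have := Ainj _ _ (aa_in i) (aa_in k) e.
  by case.
have cge : forall j, (t <= y (inl j))%N.
  move=> j; rewrite leqNgt; apply/negP => hj.
  have U : uniq (map (fun i => y (aa i)) (enum 'I_t)).
    rewrite map_inj_in_uniq ?enum_uniq // => i k _ _ e.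
    by apply: zinj; apply: val_inj.
  have sub : {subset map (fun i => y (aa i)) (enum 'I_t) <= iota 0 t}.
    by move=> c /mapP [i _ ->]; rewrite mem_iota /= add0n.
  have hsz : (size (iota 0 t) <= size (map (fun i => y (aa i)) (enum 'I_t)))%N.
    by rewrite size_iota size_map size_enum_ord.
  have [_ eqs] := uniq_min_size U sub hsz.
  have : y (inl j) \in map (fun i => y (aa i)) (enum 'I_t) by rewrite eqs mem_iota.
  case/mapP => i _ e.
  by have := hpr _ _ (hcl (inl_inA j) (aa_in i) erefl); rewrite e eqxx.
have cval : forall n (j : 'I_s), val j = n -> y (inl j) = (t + n)%N.
  elim/ltn_ind => n IH j ejn.
  have h1 := hlt (inl j); rewrite /= ejn in h1.
  have h2 := cge j.
  case: (eqVneq (y (inl j)) (t + n)%N) => // hne.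
  move/eqP: hne => hne; move: h1 h2 hne; set c := y (inl j) => h1 h2 hne.
  have hk : (c - t < n)%N by lia.
  have js : (n < s)%N by rewrite -ejn; exact: ltn_ord j.
  have hks : (c - t < s)%N by lia.
  have := IH _ hk (Ordinal hks) erefl.
  move=> e; have adj : @Jadj s t (inl (Ordinal hks)) (inl j).
    rewrite /Jadj /=; apply/eqP => /(congr1 val) /=; rewrite ejn; lia.
  have := hpr _ _ adj; rewrite e; have -> : (t + (c - t))%N = c by lia.
  by rewrite eqxx.
exists z => // -[j|[i b]] /=; first exact: cval.
rewrite -/(aa i); case: (eqVneq b (pk i)) => [->//|hb].
have -> : b = ~~ pk i by move: hb; case: b; case: (pk i).
by rewrite -/(bb i) hbb.
Qed.

Lemma Gw_nz m c : (c < m)%N -> Gw m c != 0.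
Proof.
move=> hc; rewrite /Gw hc invr_neq0 //.
apply/prodf_neq0 => k hk; rewrite subr_eq0 eqr_nat eq_sym; exact: hk.
Qed.

Lemma Tn_nz : Tn (yz (fun i => val i)) != 0.
Proof.
rewrite /Tn mulf_neq0 //.
  apply/prodf_neq0 => -[u w] /= D; rewrite subr_eq0 eqr_nat.
  move: D; case: u => [j|[i b]]; case: w => [k|[l c]] //=.
  - by move=> h; rewrite eqn_add2l neq_ltn h orbT.
  - move=> _; have := ltn_ord l; apply: contraTneq => <-; lia.
  - move=> _; have := ltn_ord i; apply: contraTneq => ->; lia.
  - by case/andP.
apply/prodf_neq0 => v _; apply: Gw_nz.
case: v => [j|[i b]] /=; first by [].
by case: (_ \in A); have := ltn_ord i; lia.
Qed.

Lemma Tn_val y : Tn y != 0 -> Tn y = Tn (yz (fun i => val i)).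
Proof.
rewrite /Tn mulf_eq0 negb_or => /andP[hP hW].
have hlt : forall v, (y v < mm v)%N.
  move=> v; move/prodf_neq0: hW => /(_ v isT).
  by rewrite /Gw; case: ifP.
have hpr : forall u w, Jadj u w -> y u != y w.
  have hD : forall u w, Dr u w -> y u != y w.
    move=> u w D; move/prodf_neq0: hP => /(_ (u, w) D) /=.
    by rewrite subr_eq0 eqr_nat.
  move=> u w /Dr_adj /orP[/hD //|/hD]; by rewrite eq_sym.
have [z zinj ez] := charz hlt hpr.
rewrite -/(Tn y) (Tn_ext ez).
exact: (Tn_inv (fun i => val i) zinj).
Qed.

Lemma yz_lt v : (yz (fun i => val i) v < s + t)%N.
Proof. case: v => [j|[i b]] /=; [have := ltn_ord j | have := ltn_ord i]; lia. Qed.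

Lemma grid_nz : grid Dr (s + t) mm != 0.
Proof.
set T0 := Tn (yz (fun i => val i)).
have -> : grid Dr (s + t) mm = \sum_(y : {ffun JV s t -> 'I_(s + t)}) Tn (fun v => y v) by [].
rewrite (eq_bigr (fun y : {ffun JV s t -> 'I_(s + t)} => ((Tn (fun v => y v) != 0) : nat)%:R * T0)); last first.
  move=> y _; case: (eqVneq (Tn (fun v => y v)) 0) => [->|h]; first by rewrite mul0r.
  by rewrite mul1r Tn_val.
rewrite -mulr_suml -natr_sum mulf_neq0 ?Tn_nz // pnatr_eq0 -lt0n.
pose y0 : {ffun JV s t -> 'I_(s + t)} := [ffun v => Ordinal (yz_lt v)].
rewrite (bigD1 y0) //=.
have -> : Tn (fun v => y0 v) = T0 by apply: Tn_ext => v; rewrite ffunE.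
by rewrite Tn_nz.
Qed.

Lemma main_in (f : JV s t -> nat)
  (hfA : forall v, v \in A -> (s + t <= f v)%N)
  (hfB : forall v, v \notin A -> (t <= f v)%N) : is_fAT (@Jadj s t) f.
Proof.
exists Dr; split; first exact: Dr_orient.
split.
  move=> v; rewrite Dr_outdeg.
  case: v => [j|p] /=.
    apply: (leq_trans _ (hfA _ (inl_inA j))); have := ltn_ord j; lia.
  case: ifP => h.
    by apply: (leq_trans _ (hfA _ h)); lia.
  by apply: (leq_trans _ (hfB _ (negbT h))); lia.
move=> e; have := grid_nz.
rewrite (grid_diff mm_le mm_pos Dr_outdeg) e subrr.
by rewrite eqxx.
Qed.

End Spec.

Local Close Scope ring_scope.

Theorem mainTheorem4 (s t : nat) (ht : 1 <= t)
  (A : {set JV s t}) (hA : #|A| = s + t) (hcl : is_clique (@Jadj s t) A)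
  (f : JV s t -> nat) (hpos : forall v, 0 < f v)
  (hfA : forall v, v \in A -> s + t <= f v)
  (hfB : forall v, v \notin A -> t <= f v) :
  is_fAT (@Jadj s t) f.
Proof.
exact: (@main_in s t ht A hA hcl f hfA hfB).
Qed.
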